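(* Let $\mathfrak n=W\oplus\mathfrak z$ be a finite-dimensional 2-step nilpotent Lie algebra over a field of characteristic zero, with basis $z_1,\dots,z_m$ of the center $\mathfrak z$ and $T_i$ as below. Suppose given: (a) a linear map $\delta_{\mathfrak z}:\mathfrak z\to\Lambda^2\mathfrak z$ satisfying co-Jacobi; write $\delta_{\mathfrak z}(z_i)=\sum_{a<b}c_i^{ab}z_a\wedge z_b$; (b) linear maps $D^1,\dots,D^m:W\to W$ with $[D^a,D^b]=\sum_ic_i^{ab}D^i$ for all $a<b$, and such that for all $x,y\in W$ $$\sum_iT_i(x)(y)\,\delta_{\mathfrak z}(z_i)=\sum_{i,j}\big(T_i(D^jx)(y)+T_i(x)(D^jy)\big)z_i\wedge z_j;$$ (c) a linear map $\varphi:W\to\Lambda^2\mathfrak z$, $\varphi(v)=\sum_{a<b}\varphi_{ab}(v)z_a\wedge z_b$, such that for all $v\in W$ $$\sum_i\varphi(D^iv)\wedge z_i+\sum_{a<b}\varphi_{ab}(v)\big(\delta_{\mathfrak z}(z_a)\wedge z_b-z_a\wedge\delta_{\mathfrak z}(z_b)\big)=0\in\Lambda^3\mathfrak z.$$ Then the linear map $\delta:\mathfrak n\to\Lambda^2\mathfrak n$ given by $\delta(z)=\delta_{\mathfrak z}(z)$ for $z\in\mathfrak z$ and $\delta(v)=\sum_iD^i(v)\wedge z_i+\varphi(v)$ for $v\in W$ is a Lie bialgebra structure on $\mathfrak n$.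
   Context: $W$ is a linear complement of $\mathfrak z$; $T_i:W\to W^*$ is defined by $[v,w]=\sum_iT_i(v)(w)z_i$. A Lie bialgebra structure is a linear $\delta:\mathfrak n\to\Lambda^2\mathfrak n$ satisfying co-Jacobi ($\delta(x_1)\wedge x_2-x_1\wedge\delta(x_2)=0$ in $\Lambda^3$, Sweedler notation $\delta(x)=x_1\wedge x_2$) and the 1-cocycle condition $\delta[x,y]=[\delta x,y]+[x,\delta y]$. (In the paper, condition (b) on the commutators is phrased as: $f\mapsto-\sum_if(z_i)D^i$ is a Lie algebra map $\mathfrak z^*\to\mathrm{End}(W)$ for the bracket dual to $\delta_{\mathfrak z}$; condition (c) as: the transpose $\Lambda^2\mathfrak z^*\to W^*$ of $\varphi$ is a 2-cocycle with values in $W^*$.) *)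

(* Defs.v *)
(* Coordinate model of a 2-step nilpotent Lie algebra
   n = W (+) z with W = F^p, z = F^m, and of exterior powers:
   Lambda^2 V  ~ antisymmetric matrices  (x /\ y  |->  x^T y - y^T x),
   Lambda^3 V  ~ alternating 3-tensors   'I_n -> 'I_n -> 'I_n -> F.     *)
From HB Require Import structures.
From mathcomp Require Import all_boot all_order all_algebra.
Set Implicit Arguments. Unset Strict Implicit. Unset Printing Implicit Defensive.
Import GRing.Theory.
Local Open Scope ring_scope.

Section Ext.
Variable F : fieldType.

Definition ev n (i : 'I_n) : 'rV[F]_n := delta_mx 0 i.

Definition wedge2 n (x y : 'rV[F]_n) : 'M[F]_n := x^T *m y - y^T *m x.

Definition in_L2 n (w : 'M[F]_n) : Prop :=
  (forall i j, w i j = - w j i) /\ (forall i, w i i = 0).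

(* Lambda^3 (F^n) as 3-tensors; omega /\ x and x /\ omega *)
Definition L3 n := 'I_n -> 'I_n -> 'I_n -> F.
Definition wedge21 n (w : 'M[F]_n) (x : 'rV[F]_n) : L3 n :=
  fun i j k => w i j * x 0 k + w j k * x 0 i + w k i * x 0 j.
Definition wedge12 n (x : 'rV[F]_n) (w : 'M[F]_n) : L3 n :=
  fun i j k => x 0 i * w j k + x 0 j * w k i + x 0 k * w i j.

Definition is_linear n1 (U : lmodType F) (f : 'rV[F]_n1 -> U) : Prop :=
  forall (a : F) x y, f (a *: x + y) = a *: f x + f y.

(* co-Jacobi expression: for omega = sum_{a<b} w_ab e_a /\ e_b,
   sum_{a<b} w_ab (delta(e_a) /\ e_b - e_a /\ delta(e_b)) in Lambda^3 *)
Definition cojac_expr n (delta : 'rV[F]_n -> 'M[F]_n) (w : 'M[F]_n) : L3 n :=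
  fun i j k => \sum_(a < n) \sum_(b < n | (a < b)%N)
     w a b * (wedge21 (delta (ev a)) (ev b) i j k
              - wedge12 (ev a) (delta (ev b)) i j k).

Definition cojacobi n (delta : 'rV[F]_n -> 'M[F]_n) : Prop :=
  forall x i j k, cojac_expr delta (delta x) i j k = 0.

(* adjoint action of x on Lambda^2: [x, a/\b] = [x,a]/\b + a/\[x,b] *)
Definition adact n (br : 'rV[F]_n -> 'rV[F]_n -> 'rV[F]_n)
    (x : 'rV[F]_n) (w : 'M[F]_n) : 'M[F]_n :=
  \sum_(a < n) \sum_(b < n | (a < b)%N)
     w a b *: (wedge2 (br x (ev a)) (ev b) + wedge2 (ev a) (br x (ev b))).

(* 1-cocycle: delta[x,y] = [delta x, y] + [x, delta y],
   where [omega, y] = - y.omega *)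
Definition cocycle n (br : 'rV[F]_n -> 'rV[F]_n -> 'rV[F]_n)
    (delta : 'rV[F]_n -> 'M[F]_n) : Prop :=
  forall x y, delta (br x y) = adact br x (delta y) - adact br y (delta x).

Definition lie_bialgebra n (br : 'rV[F]_n -> 'rV[F]_n -> 'rV[F]_n)
    (delta : 'rV[F]_n -> 'M[F]_n) : Prop :=
  [/\ is_linear delta, (forall x, in_L2 (delta x)), cojacobi delta
    & cocycle br delta].

Section TwoStep.
Variables p m : nat.

Definition Tform (Ti : 'M[F]_p) (x y : 'rV[F]_p) : F := (x *m Ti *m y^T) 0 0.

Definition inW (v : 'rV[F]_p) : 'rV[F]_(p + m) := row_mx v 0.
Definition zb (i : 'I_m) : 'rV[F]_(p + m) := row_mx 0 (ev i).

Definition brN (T : 'I_m -> 'M[F]_p) (x y : 'rV[F]_(p + m)) : 'rV[F]_(p + m) :=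
  \sum_(i < m) Tform (T i) (lsubmx x) (lsubmx y) *: zb i.

Definition Dapp (D : 'I_m -> 'M[F]_p) (j : 'I_m) (v : 'rV[F]_p) : 'rV[F]_p :=
  v *m D j.

Definition strc (dZ : 'rV[F]_m -> 'M[F]_m) (i a b : 'I_m) : F := dZ (ev i) a b.

Definition lift2 (w : 'M[F]_m) : 'M[F]_(p + m) :=
  \sum_(a < m) \sum_(b < m | (a < b)%N) w a b *: wedge2 (zb a) (zb b).

Definition deltaN (dZ : 'rV[F]_m -> 'M[F]_m) (D : 'I_m -> 'M[F]_p)
    (phi : 'rV[F]_p -> 'M[F]_m) (x : 'rV[F]_(p + m)) : 'M[F]_(p + m) :=
  lift2 (dZ (rsubmx x))
  + \sum_(i < m) wedge2 (inW (Dapp D i (lsubmx x))) (zb i)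
  + lift2 (phi (lsubmx x)).

End TwoStep.
End Ext.
Arguments ev {F n} i.

(* Main.v *)
Require Import Defs.
From HB Require Import structures.
From mathcomp Require Import all_boot all_order all_algebra ring.
Set Implicit Arguments. Unset Strict Implicit. Unset Printing Implicit Defensive.
Import GRing.Theory.
Local Open Scope ring_scope.

Section Aux.
Variable F : fieldType.

Lemma evE n (i : 'I_n) j : (ev i : 'rV[F]_n) 0 j = (i == j)%:R.
Proof. by rewrite /ev mxE eqxx eq_sym. Qed.

Lemma wedge2E n (x y : 'rV[F]_n) i j :
  wedge2 x y i j = x 0 i * y 0 j - y 0 i * x 0 j.
Proof. by rewrite /wedge2 !mxE !big_ord1 !mxE. Qed.

Lemma sum_ind n (G : 'I_n -> F) k : \sum_(b < n) G b * (b == k)%:R = G k.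
Proof.
rewrite (bigD1 k) //= eqxx mulr1 big1 ?addr0 // => b /negbTE ->; by rewrite mulr0.
Qed.

Lemma sum_indl n (G : 'I_n -> F) k : \sum_(b < n) (k == b)%:R * G b = G k.
Proof.
rewrite -[RHS](sum_ind G k); apply: eq_bigr => b _; by rewrite mulrC eq_sym.
Qed.

Section Lin.
Variables (n : nat) (U : lmodType F) (f : 'rV[F]_n -> U) (Hf : is_linear f).
Lemma lin0 : f 0 = 0.
Proof. have h := Hf 1 0 0; rewrite scale1r addr0 scale1r in h.
by apply: (addrI (f 0)); rewrite addr0 -h. Qed.
Lemma linD x y : f (x + y) = f x + f y.
Proof. by have := Hf 1 x y; rewrite scale1r scale1r. Qed.
Lemma linZ a x : f (a *: x) = a *: f x.
Proof. by have := Hf a x 0; rewrite !addr0 lin0 addr0. Qed.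
Lemma linN x : f (- x) = - f x.
Proof. by have := linZ (-1) x; rewrite scaleN1r scaleN1r. Qed.
Lemma lin_sum (c : 'I_n -> F) :
  f (\sum_(i < n) c i *: ev i) = \sum_(i < n) c i *: f (ev i).
Proof.
rewrite (big_morph f linD lin0); apply: eq_bigr => i _; exact: linZ.
Qed.
End Lin.

Lemma vec_expand n (x : 'rV[F]_n) : x = \sum_(i < n) x 0 i *: ev i.
Proof.
apply/rowP => j; rewrite summxE; under eq_bigr do rewrite mxE evE.
by rewrite sum_ind.
Qed.

Lemma sum_lt_anti n (w : 'M[F]_n) (f : 'I_n -> 'I_n -> F) : in_L2 w ->
  \sum_(a < n) \sum_(b < n | (a < b)%N) w a b * (f a b - f b a)
  = \sum_(a < n) \sum_(b < n) w a b * f a b.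
Proof.
case=> Ha Hd.
under eq_bigr do under eq_bigr do rewrite mulrBr.
under eq_bigr do rewrite sumrB.
rewrite sumrB.
rewrite [X in _ - X](exchange_big_dep xpredT) //=.
have -> : \sum_(j < n) \sum_(i < n | (i < j)%N) w i j * f j i
   = - \sum_(a < n) \sum_(b < n | (b < a)%N) w a b * f a b.
  rewrite -sumrN; apply: eq_bigr => a _; rewrite -sumrN; apply: eq_bigr => b _.
  by rewrite Ha mulNr.
rewrite opprK -big_split /=; apply: eq_bigr => a _.
rewrite [RHS](bigID (fun b : 'I_n => (a < b)%N)) /=; congr (_ + _).
rewrite [RHS](bigID (fun b : 'I_n => (b < a)%N)) /=.
rewrite [X in _ = _ + X]big1 ?addr0.
  apply: eq_bigl => b; case: (ltnP b a) => h /=; last by rewrite andbF.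
  by rewrite andbT -leqNgt ltnW.
move=> b /andP[]; rewrite -!leqNgt => h1 h2.
have -> : b = a by apply: val_inj; apply/eqP; rewrite eqn_leq h1 h2.
by rewrite Hd mul0r.
Qed.


Definition colv n (w : 'M[F]_n) (k : 'I_n) : 'rV[F]_n := \sum_(a < n) w a k *: ev a.
Lemma colvE n (w : 'M[F]_n) k i : colv w k 0 i = w i k.
Proof. rewrite /colv summxE; under eq_bigr do rewrite mxE evE. by rewrite sum_ind. Qed.

Lemma wedge12_21 n x (w : 'M[F]_n) i j k : wedge12 x w i j k = wedge21 w x i j k.
Proof. rewrite /wedge12 /wedge21; ring. Qed.

Lemma cojacE n (delta : 'rV[F]_n -> 'M[F]_n) (w : 'M[F]_n) i j k :
  is_linear delta -> in_L2 w ->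
  cojac_expr delta w i j k =
  delta (colv w k) i j + delta (colv w i) j k + delta (colv w j) k i.
Proof.
move=> Hl Hw; rewrite /cojac_expr.
under eq_bigr do under eq_bigr do rewrite wedge12_21.
rewrite (sum_lt_anti (fun a b => wedge21 (delta (ev a)) (ev b) i j k)) //.
rewrite /colv !lin_sum // !summxE.
under eq_bigr do under eq_bigr do rewrite /wedge21 !evE !mulrDr !mulrA.
under eq_bigr do rewrite !big_split /= !sum_ind.
rewrite !big_split /=.
by congr (_ + _ + _); apply: eq_bigr => a _; rewrite mxE.
Qed.


Lemma adactE n (br : 'rV[F]_n -> 'rV[F]_n -> 'rV[F]_n) x (w : 'M[F]_n) i j :
  is_linear (br x) -> in_L2 w ->
  adact br x w i j = br x (colv w j) 0 i - br x (colv w i) 0 j.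
Proof.
move=> Hl Hw; rewrite /adact summxE.
under eq_bigr do rewrite summxE.
under eq_bigr do under eq_bigr do rewrite mxE.
pose f := fun a b : 'I_n => br x (ev a) 0 i * ev b 0 j - ev b 0 i * br x (ev a) 0 j.
have E : forall a b : 'I_n, (wedge2 (br x (ev a)) (ev b) + wedge2 (ev a) (br x (ev b))) i j
  = f a b - f b a.
  by move=> a b; rewrite mxE !wedge2E /f; ring.
under eq_bigr do under eq_bigr do rewrite E.
rewrite (sum_lt_anti f) // /f.
rewrite /colv !lin_sum // !summxE.
under eq_bigr do under eq_bigr do rewrite !evE mulrBr !mulrA.
under eq_bigr do rewrite sumrB.
rewrite sumrB; congr (_ - _).
  by apply: eq_bigr => a _; rewrite sum_ind mxE.
apply: eq_bigr => a _. rewrite mxE.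
under eq_bigr do rewrite -mulrA [_%:R * _]mulrC mulrA.
by rewrite sum_ind.
Qed.

End Aux.

Section Main.
Variables (F : fieldType) (p m : nat) (T : 'I_m -> 'M[F]_p)
    (dZ : 'rV[F]_m -> 'M[F]_m) (D : 'I_m -> 'M[F]_p)
    (phi : 'rV[F]_p -> 'M[F]_m).
Hypotheses (HdZl : is_linear dZ) (HdZa : forall z, in_L2 (dZ z))
  (Hphil : is_linear phi) (Hphia : forall v, in_L2 (phi v)).

Lemma mxDE n1 n2 (A B : 'M[F]_(n1,n2)) i j : (A + B) i j = A i j + B i j.
Proof. exact: mxE. Qed.
Lemma mxZE n1 n2 a (A : 'M[F]_(n1,n2)) i j : (a *: A) i j = a * A i j.
Proof. exact: mxE. Qed.
Lemma mxNE n1 n2 (A : 'M[F]_(n1,n2)) i j : (- A) i j = - A i j.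
Proof. exact: mxE. Qed.

Lemma sum_indr n (G : 'I_n -> F) k : \sum_(b < n) (b == k)%:R * G b = G k.
Proof. rewrite -[RHS](sum_ind G k); apply: eq_bigr => b _; by rewrite mulrC. Qed.

Lemma zbl (c : 'I_m) s : zb F p c 0 (lshift m s) = 0.
Proof. by rewrite /zb row_mxEl mxE. Qed.
Lemma zbr (c : 'I_m) a : zb F p c 0 (rshift p a) = (c == a)%:R.
Proof. by rewrite /zb row_mxEr evE. Qed.
Lemma inWl (u : 'rV[F]_p) s : inW m u 0 (lshift m s) = u 0 s.
Proof. by rewrite /inW row_mxEl. Qed.
Lemma inWr (u : 'rV[F]_p) a : inW m u 0 (rshift p a) = 0.
Proof. by rewrite /inW row_mxEr mxE. Qed.

Lemma lift2E (w : 'M[F]_m) i j : in_L2 w ->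
  lift2 p w i j = \sum_(c < m) \sum_(d < m) w c d * (zb F p c 0 i * zb F p d 0 j).
Proof.
move=> Hw; rewrite /lift2 summxE.
under eq_bigr do rewrite summxE.
under eq_bigr do under eq_bigr do rewrite mxZE wedge2E.
by rewrite (sum_lt_anti (fun c d => zb F p c 0 i * zb F p d 0 j)).
Qed.

Lemma lift2_l (w : 'M[F]_m) s j : in_L2 w -> lift2 p w (lshift m s) j = 0.
Proof.
move=> Hw; rewrite lift2E // big1 // => c _; rewrite big1 // => d _.
by rewrite zbl !mul0r mulr0.
Qed.
Lemma lift2_r (w : 'M[F]_m) i t : in_L2 w -> lift2 p w i (lshift m t) = 0.
Proof.
move=> Hw; rewrite lift2E // big1 // => c _; rewrite big1 // => d _.
by rewrite zbl !mulr0.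
Qed.
Lemma lift2_rr (w : 'M[F]_m) a b : in_L2 w -> lift2 p w (rshift p a) (rshift p b) = w a b.
Proof.
move=> Hw; rewrite lift2E //.
under eq_bigr do under eq_bigr do rewrite !zbr mulrA.
under eq_bigr do rewrite sum_ind.
by rewrite sum_ind.
Qed.

Definition Ssum (x : 'rV[F]_(p + m)) : 'M[F]_(p + m) :=
  \sum_(l < m) wedge2 (inW m (Dapp D l (lsubmx x))) (zb F p l).

Lemma SE x i j : Ssum x i j = \sum_(l < m)
  (inW m (Dapp D l (lsubmx x)) 0 i * zb F p l 0 j - zb F p l 0 i * inW m (Dapp D l (lsubmx x)) 0 j).
Proof. by rewrite /Ssum summxE; apply: eq_bigr => l _; rewrite wedge2E. Qed.

Lemma deltaNE x i j : deltaN dZ D phi x i j =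
  lift2 p (dZ (rsubmx x)) i j + Ssum x i j + lift2 p (phi (lsubmx x)) i j.
Proof. by rewrite /deltaN !mxDE. Qed.

Lemma dN_ll x s t : deltaN dZ D phi x (lshift m s) (lshift m t) = 0.
Proof.
rewrite deltaNE !lift2_l // SE big1 ?add0r ?addr0 // => l _.
by rewrite !zbl mulr0 mul0r subrr.
Qed.
Lemma dN_lr x s b : deltaN dZ D phi x (lshift m s) (rshift p b) = (lsubmx x *m D b) 0 s.
Proof.
rewrite deltaNE !lift2_l // SE add0r addr0.
under eq_bigr do rewrite zbl zbr mul0r subr0 inWl.
by rewrite sum_ind.
Qed.
Lemma dN_rl x a t : deltaN dZ D phi x (rshift p a) (lshift m t) = - (lsubmx x *m D a) 0 t.
Proof.
rewrite deltaNE !lift2_r // SE add0r addr0.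
under eq_bigr do rewrite zbl zbr mulr0 sub0r inWl.
by rewrite sumrN sum_indr.
Qed.
Lemma dN_rr x a b : deltaN dZ D phi x (rshift p a) (rshift p b) =
  dZ (rsubmx x) a b + phi (lsubmx x) a b.
Proof.
rewrite deltaNE !lift2_rr // SE big1 ?addr0 // => l _.
by rewrite !inWr mulr0 mul0r subrr.
Qed.


Local Notation dN := (deltaN dZ D phi).

Lemma lsubL a (x y : 'rV[F]_(p+m)) : lsubmx (a *: x + y) = a *: lsubmx x + lsubmx y.
Proof. by apply/rowP => k; rewrite !mxE. Qed.
Lemma rsubL a (x y : 'rV[F]_(p+m)) : rsubmx (a *: x + y) = a *: rsubmx x + rsubmx y.
Proof. by apply/rowP => k; rewrite !mxE. Qed.

Lemma dN_lin : is_linear dN.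
Proof.
move=> a x y; apply/matrixP => i j; rewrite [RHS]mxDE [X in _ = X + _]mxZE.
case: (split_ordP i) => s ->; case: (split_ordP j) => t ->.
- by rewrite !dN_ll mulr0 addr0.
- by rewrite !dN_lr lsubL mulmxDl -scalemxAl mxE [X in X + _]mxE.
- by rewrite !dN_rl lsubL mulmxDl -scalemxAl mxE [X in X + _]mxE opprD mulrN.
- rewrite !dN_rr lsubL rsubL HdZl Hphil !mxDE !mxZE; ring.
Qed.

Lemma dN_L2 x : in_L2 (dN x).
Proof.
split.
  move=> i j.
  case: (split_ordP i) => s ->; case: (split_ordP j) => t ->.
  - by rewrite !dN_ll oppr0.
  - by rewrite dN_lr dN_rl opprK.
  - by rewrite dN_lr dN_rl.
  - rewrite !dN_rr opprD; case: (HdZa (rsubmx x)) => -> _; case: (Hphia (lsubmx x)) => -> _ //.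
move=> i; case: (split_ordP i) => s ->.
- by rewrite dN_ll.
- by rewrite dN_rr; case: (HdZa (rsubmx x)) => _ ->; case: (Hphia (lsubmx x)) => _ ->; rewrite addr0.
Qed.


Lemma sum2_delta (c : 'I_m -> 'I_m -> F) s t :
  \sum_(k < m) \sum_(j < m) c k j * ((k == s)%:R * (j == t)%:R - (j == s)%:R * (k == t)%:R)
  = c s t - c t s.
Proof.
under eq_bigr do (under eq_bigr do rewrite mulrBr; rewrite sumrB).
rewrite sumrB; congr (_ - _).
  by under eq_bigr do under eq_bigr do rewrite mulrA; under eq_bigr do rewrite sum_ind; rewrite sum_ind.
under eq_bigr do under eq_bigr do rewrite [(_ == s)%:R * (_ == t)%:R]mulrC mulrA.
by under eq_bigr do rewrite sum_ind; rewrite sum_ind.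
Qed.

Lemma TformE (Ti : 'M[F]_p) x y : Tform Ti x y = \sum_(j < p) (x *m Ti) 0 j * y 0 j.
Proof. by rewrite /Tform mxE; apply: eq_bigr => j _; rewrite !mxE. Qed.
Lemma TformDl (Ti : 'M[F]_p) (x x' y : 'rV[F]_p) : Tform Ti (x + x') y = Tform Ti x y + Tform Ti x' y.
Proof. rewrite !TformE -big_split; apply: eq_bigr => j _; by rewrite mulmxDl mxDE mulrDl. Qed.
Lemma TformLr (Ti : 'M[F]_p) (x : 'rV[F]_p) a (y y' : 'rV[F]_p) : Tform Ti x (a *: y + y') = a * Tform Ti x y + Tform Ti x y'.
Proof. rewrite !TformE mulr_sumr -big_split /=; apply: eq_bigr => j _; rewrite !mxE; ring. Qed.
Lemma TformDr (Ti : 'M[F]_p) (x y y' : 'rV[F]_p) : Tform Ti x (y + y') = Tform Ti x y + Tform Ti x y'.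
Proof. by have := TformLr Ti x 1 y y'; rewrite scale1r mul1r. Qed.
Lemma Tform0r (Ti : 'M[F]_p) (x : 'rV[F]_p) : Tform Ti x 0 = 0.
Proof. by rewrite TformE big1 // => j _; rewrite !mxE mulr0. Qed.
Lemma Tanti (Ti : 'M[F]_p) (x y : 'rV[F]_p) : (forall v, Tform Ti v v = 0) -> Tform Ti x y = - Tform Ti y x.
Proof.
move=> H; have := H (x + y); rewrite !TformDl !TformDr !H add0r addr0.
by move/eqP; rewrite addr_eq0 => /eqP.
Qed.

Lemma brNl (x y : 'rV[F]_(p+m)) s : brN T x y 0 (lshift m s) = 0.
Proof. by rewrite /brN summxE big1 // => c _; rewrite mxE zbl mulr0. Qed.
Lemma brNr (x y : 'rV[F]_(p+m)) c : brN T x y 0 (rshift p c) = Tform (T c) (lsubmx x) (lsubmx y).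
Proof.
rewrite /brN summxE; under eq_bigr do rewrite mxE zbr.
by rewrite sum_ind.
Qed.
Lemma brN_lin (x : 'rV[F]_(p+m)) : is_linear (brN T x).
Proof.
move=> a y y'; apply/rowP => k; rewrite mxE [X in _ = X + _]mxE.
case: (split_ordP k) => s ->.
- by rewrite !brNl mulr0 addr0.
- by rewrite !brNr lsubL TformLr.
Qed.
Lemma lsub_brN (x y : 'rV[F]_(p+m)) : lsubmx (brN T x y) = 0.
Proof. by apply/rowP => s; rewrite !mxE brNl. Qed.
Lemma rsub_brN (x y : 'rV[F]_(p+m)) : rsubmx (brN T x y) =
  \sum_(c < m) Tform (T c) (lsubmx x) (lsubmx y) *: ev c.
Proof.
apply/rowP => c; rewrite mxE brNr summxE.
under eq_bigr do rewrite mxE evE.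
by rewrite sum_ind.
Qed.

Lemma lsub_colv_l (y : 'rV[F]_(p+m)) s : lsubmx (colv (dN y) (lshift m s)) = 0.
Proof. by apply/rowP => t; rewrite !mxE colvE dN_ll. Qed.
Lemma lsub_colv_r (y : 'rV[F]_(p+m)) b : lsubmx (colv (dN y) (rshift p b)) = lsubmx y *m D b.
Proof. by apply/rowP => t; rewrite mxE colvE dN_lr. Qed.
Lemma rsub_colv_l (y : 'rV[F]_(p+m)) s : rsubmx (colv (dN y) (lshift m s)) =
  \sum_(l < m) (- (lsubmx y *m D l) 0 s) *: ev l.
Proof.
apply/rowP => c; rewrite mxE colvE dN_rl summxE.
under eq_bigr do rewrite mxE evE.
by rewrite sum_ind.
Qed.
Lemma rsub_colv_r (y : 'rV[F]_(p+m)) b : rsubmx (colv (dN y) (rshift p b)) =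
  colv (dZ (rsubmx y)) b + colv (phi (lsubmx y)) b.
Proof. by apply/rowP => c; rewrite mxE colvE dN_rr mxDE !colvE. Qed.

Hypothesis HT0 : forall i v, Tform (T i) v v = 0.
Hypothesis Hb2 : forall x y,
     \sum_(i < m) Tform (T i) x y *: dZ (ev i)
     = \sum_(i < m) \sum_(j < m)
         (Tform (T i) (Dapp D j x) y + Tform (T i) x (Dapp D j y))
           *: wedge2 (ev i) (ev j).

Lemma dN_cocycle : cocycle (brN T) dN.
Proof.
move=> x y; apply/matrixP => i j.
rewrite [RHS]mxDE [X in _ = _ + X]mxNE (adactE i j (brN_lin x) (dN_L2 y)) (adactE i j (brN_lin y) (dN_L2 x)).
case: (split_ordP i) => s ->; case: (split_ordP j) => t ->.
- by rewrite dN_ll !brNl !subrr ?oppr0 ?subr0.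
- rewrite dN_lr lsub_brN mul0mx mxE !brNl !brNr !lsub_colv_l !Tform0r.
  by rewrite !subrr ?oppr0 ?subr0.
- rewrite dN_rl lsub_brN mul0mx mxE !brNl !brNr !lsub_colv_l !Tform0r.
  by rewrite !subrr ?oppr0 ?subr0.
rewrite dN_rr lsub_brN lin0 // mxE addr0 !brNr !lsub_colv_r rsub_brN lin_sum //.
rewrite summxE.
have := congr1 (fun M : 'M[F]_m => M s t) (Hb2 (lsubmx x) (lsubmx y)).
rewrite !summxE.
move=> ->.
under eq_bigr do rewrite summxE.
under eq_bigr do under eq_bigr do rewrite mxZE wedge2E !evE.
rewrite sum2_delta /Dapp.
rewrite (Tanti (lsubmx x *m D t) (lsubmx y) (HT0 s)).
rewrite (Tanti (lsubmx x *m D s) (lsubmx y) (HT0 t)).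
ring.
Qed.


Hypothesis HdZc : cojacobi dZ.
Hypothesis Hb1 : forall a b : 'I_m, (a < b)%N -> forall x,
     Dapp D a (Dapp D b x) - Dapp D b (Dapp D a x)
     = \sum_(i < m) strc dZ i a b *: Dapp D i x.
Hypothesis Hc : forall v i j k,
     \sum_(l < m) wedge21 (phi (Dapp D l v)) (ev l) i j k
     + \sum_(a < m) \sum_(b < m | (a < b)%N)
         phi v a b * (wedge21 (dZ (ev a)) (ev b) i j k
                      - wedge12 (ev a) (dZ (ev b)) i j k) = 0.

Lemma Hcomm0 (a b : 'I_m) (v : 'rV[F]_p) s : (a < b)%N ->
  (v *m D b *m D a) 0 s - (v *m D a *m D b) 0 s
  = \sum_(i < m) dZ (ev i) a b * (v *m D i) 0 s.
Proof.
move=> h; have := congr1 (fun M : 'rV[F]_p => M 0 s) (Hb1 h v).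
rewrite /Dapp /strc /= mxDE mxNE summxE => ->.
by apply: eq_bigr => i _; rewrite mxE.
Qed.

Lemma Hcomm (a b : 'I_m) (v : 'rV[F]_p) s :
  (v *m D b *m D a) 0 s - (v *m D a *m D b) 0 s
  = \sum_(i < m) dZ (ev i) a b * (v *m D i) 0 s.
Proof.
case: (ltngtP a b) => h.
- exact: Hcomm0.
- have := Hcomm0 v s h; move/(congr1 (fun r => - r)); rewrite opprB => ->.
  rewrite -sumrN; apply: eq_bigr => i _.
  by case: (HdZa (ev i)) => -> _; rewrite mulNr opprK.
- have -> : a = b by apply: val_inj.
  rewrite subrr big1 // => i _.
  by case: (HdZa (ev i)) => _ ->; rewrite mul0r.
Qed.

Definition Pc x i j k := dN (colv (dN x) k) i j + dN (colv (dN x) i) j k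
  + dN (colv (dN x) j) k i.

Lemma Pc_rot x i j k : Pc x i j k = Pc x j k i.
Proof. rewrite /Pc; ring. Qed.

Lemma c_WWW x s t u : Pc x (lshift m s) (lshift m t) (lshift m u) = 0.
Proof. by rewrite /Pc !dN_ll !addr0. Qed.

Lemma c_WWZ x s t c : Pc x (lshift m s) (lshift m t) (rshift p c) = 0.
Proof.
rewrite /Pc dN_ll dN_lr dN_rl !lsub_colv_l !mul0mx !mxE.
by rewrite oppr0 !addr0.
Qed.

Lemma c_WZZ x s a b : Pc x (lshift m s) (rshift p a) (rshift p b) = 0.
Proof.
rewrite /Pc dN_lr dN_rr dN_rl !lsub_colv_r rsub_colv_l lsub_colv_l (lin0 Hphil).
rewrite (lin_sum HdZl) summxE [X in _ + (_ + X)]mxE addr0.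
rewrite addrAC Hcomm -big_split /= big1 // => i _.
rewrite mxZE; ring.
Qed.

Lemma wsum (v : 'rV[F]_p) a b c :
  \sum_(l < m) wedge21 (phi (Dapp D l v)) (ev l) a b c
  = phi (v *m D c) a b + phi (v *m D a) b c + phi (v *m D b) c a.
Proof.
under eq_bigr do rewrite /wedge21 !evE.
by rewrite !big_split /= !sum_ind.
Qed.

Lemma c_ZZZ x a b c : Pc x (rshift p a) (rshift p b) (rshift p c) = 0.
Proof.
rewrite /Pc !dN_rr !rsub_colv_r !lsub_colv_r !(linD HdZl) !mxDE.
have h1 := cojacE a b c HdZl (HdZa (rsubmx x)); rewrite HdZc in h1.
have h2 : \sum_(l < m) wedge21 (phi (Dapp D l (lsubmx x))) (ev l) a b c
   + cojac_expr dZ (phi (lsubmx x)) a b c = 0 := Hc (lsubmx x) a b c.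
rewrite wsum (cojacE a b c HdZl (Hphia (lsubmx x))) in h2.
rewrite -[RHS](addr0 0) {1}h1 -h2; ring.
Qed.

Lemma dN_cojacobi : cojacobi dN.
Proof.
move=> x i j k; rewrite (cojacE i j k dN_lin (dN_L2 x)).
change (Pc x i j k = 0).
case: (split_ordP i) => s ->; case: (split_ordP j) => t ->;
  case: (split_ordP k) => u ->.
- exact: c_WWW.
- exact: c_WWZ.
- by rewrite Pc_rot Pc_rot c_WWZ.
- exact: c_WZZ.
- by rewrite Pc_rot c_WWZ.
- by rewrite Pc_rot c_WZZ.
- by rewrite Pc_rot Pc_rot c_WZZ.
- exact: c_ZZZ.
Qed.

End Main.

Unset Implicit Arguments.
Set Strict Implicit.
Theorem mainTheorem6 (F : fieldType) (p m : nat) (T : 'I_m -> 'M[F]_p)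
    (dZ : 'rV[F]_m -> 'M[F]_m) (D : 'I_m -> 'M[F]_p)
    (phi : 'rV[F]_p -> 'M[F]_m) :
  (* characteristic zero *)
  [pchar F] =i pred0 ->
  (* n = W (+) z is a 2-step nilpotent Lie algebra with center exactly z *)
  (forall i v, Tform (T i) v v = 0) ->
  (forall v, (forall w i, Tform (T i) v w = 0) -> v = 0) ->
  (exists i, T i != 0) ->
  (* (a) *)
  is_linear dZ -> (forall z, in_L2 (dZ z)) -> cojacobi dZ ->
  (* (b) *)
  (forall a b : 'I_m, (a < b)%N -> forall x,
     Dapp D a (Dapp D b x) - Dapp D b (Dapp D a x)
     = \sum_(i < m) strc dZ i a b *: Dapp D i x) ->
  (forall x y,
     \sum_(i < m) Tform (T i) x y *: dZ (ev i)
     = \sum_(i < m) \sum_(j < m)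
         (Tform (T i) (Dapp D j x) y + Tform (T i) x (Dapp D j y))
           *: wedge2 (ev i) (ev j)) ->
  (* (c) *)
  is_linear phi -> (forall v, in_L2 (phi v)) ->
  (forall v i j k,
     \sum_(l < m) wedge21 (phi (Dapp D l v)) (ev l) i j k
     + \sum_(a < m) \sum_(b < m | (a < b)%N)
         phi v a b * (wedge21 (dZ (ev a)) (ev b) i j k
                      - wedge12 (ev a) (dZ (ev b)) i j k) = 0) ->
  lie_bialgebra (brN T) (deltaN dZ D phi).
Proof.
move=> _ HT0 _ _ HdZl HdZa HdZc Hb1 Hb2 Hphil Hphia Hc.
split.
- exact: dN_lin.
- exact: dN_L2.
- exact: (dN_cojacobi HdZl HdZa Hphil Hphia HdZc Hb1 Hc).
- exact: (dN_cocycle HdZl HdZa Hphil Hphia HT0 Hb2).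
Qed.
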